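(* Fix $n\ge 3$, and assume that for all positive integers $w_1,\ldots,w_{n-1}$ one has either $\mathrm{ML}(w_1,\ldots,w_{n-1})=\frac{s}{(n-1)s+1}$ for some $s\in\mathbb{N}$ or $\mathrm{ML}(w_1,\ldots,w_{n-1})\ge\frac{1}{n-1}$. Let $v_1<\cdots<v_{n-1}$ be positive integers with $\mathrm{ML}(v_1,\ldots,v_{n-1})=L>\frac1n$. Then $\mathrm{ML}(v_1,\ldots,v_n)\ge\frac1n$ for every positive integer $v_n$ with $v_n\ge(2n-1)v_{n-1}$.
   Context: For a real number $x$, $\Vert x\Vert$ denotes the distance from $x$ to the nearest integer. For positive integers $v_1,\ldots,v_k$, the maximum loneliness is $\mathrm{ML}(v_1,\ldots,v_k)=\max_{t\in\mathbb{R}}\min_{1\le i\le k}\Vert t v_i\Vert$. Here $\mathbb{N}=\{1,2,3,\ldots\}$. *)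

(* Defs.v *)
From Stdlib Require Import Reals Lra List.
From Coquelicot Require Import Coquelicot.
Open Scope R_scope.

Definition dist_int (x : R) : R :=
  Rmin (x - IZR (Int_part x)) (IZR (Int_part x) + 1 - x).

(* min_{i} ||t v_i|| over a finite list of positive integers (list nonempty in uses). *)
Definition min_dist (t : R) (vs : list nat) : R :=
  match vs with
  | nil => 0
  | v :: rest => fold_left (fun m w => Rmin m (dist_int (t * INR w))) rest (dist_int (t * INR v))
  end.

(* ML(v_1,...,v_k) = sup_t min_i ||t v_i||  (the sup is attained, so this is the max). *)
Definition ML (vs : list nat) : R :=
  real (Lub_Rbar (fun y => exists t : R, y = min_dist t vs)).

(* Main.v *)
Require Import Defs.
From Stdlib Require Import Reals Lra Lia List ZArith.
From Coquelicot Require Import Coquelicot.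
Open Scope R_scope.

Lemma dist_le (x:R) (k:Z): dist_int x <= Rabs (x - IZR k).
Proof.
  unfold dist_int. destruct (base_Int_part x) as [H1 H2]. set (f := Int_part x) in *.
  destruct (Z_le_gt_dec k f) as [Hk|Hk].
  - apply IZR_le in Hk. rewrite Rabs_right by lra.
    apply Rle_trans with (x - IZR f). apply Rmin_l. lra.
  - assert (H: IZR (f+1) <= IZR k) by (apply IZR_le; lia). rewrite plus_IZR in H.
    rewrite Rabs_left1 by lra. eapply Rle_trans. apply Rmin_r. lra.
Qed.

Lemma dist_eq x: exists k, dist_int x = Rabs (x - IZR k).
Proof.
  unfold dist_int. destruct (base_Int_part x) as [H1 H2]. set (f := Int_part x) in *.
  destruct (Rle_dec (x - IZR f) (IZR f + 1 - x)).
  - rewrite Rmin_left by lra. exists f. rewrite Rabs_right by lra. ring.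
  - rewrite Rmin_right by lra. exists (f+1)%Z. rewrite plus_IZR. rewrite Rabs_left1 by lra. ring.
Qed.

Lemma dist_ge_iff x c: dist_int x >= c <-> forall k, Rabs (x - IZR k) >= c.
Proof.
  split.
  - intros H k. pose proof (dist_le x k). lra.
  - intros H. destruct (dist_eq x) as [k Hk]. rewrite Hk. apply H.
Qed.

Lemma dist_lip x y: dist_int y >= dist_int x - Rabs (x - y).
Proof.
  destruct (dist_eq y) as [k Hk]. rewrite Hk. pose proof (dist_le x k).
  pose proof (Rabs_triang (x - y) (y - IZR k)).
  replace (x - y + (y - IZR k)) with (x - IZR k) in H0 by ring. lra.
Qed.

Lemma dist_nonneg x: dist_int x >= 0.
Proof. destruct (dist_eq x) as [k Hk]. rewrite Hk. pose proof (Rabs_pos (x - IZR k)). lra. Qed.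

Lemma dist_le_half x: dist_int x <= 1/2.
Proof.
  unfold dist_int. destruct (Rle_dec (x - IZR (Int_part x)) (IZR (Int_part x) + 1 - x)).
  - eapply Rle_trans. apply Rmin_l. lra.
  - eapply Rle_trans. apply Rmin_r. lra.
Qed.

Lemma dist_int_plus (m:Z) c: 0 < c <= 1/2 -> dist_int (IZR m + c) >= c.
Proof.
  intros Hc. apply dist_ge_iff. intros k.
  destruct (Z_le_gt_dec k m) as [Hk|Hk].
  - apply IZR_le in Hk. rewrite Rabs_right by lra. lra.
  - assert (H: IZR (m+1) <= IZR k) by (apply IZR_le; lia). rewrite plus_IZR in H.
    rewrite Rabs_left1 by lra. lra.
Qed.

Lemma gap a c: 0 < c <= 1/2 -> exists y, a <= y <= a + 2*c /\ dist_int y >= c.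
Proof.
  intros Hc. destruct (base_Int_part a) as [H1 H2]. set (f := Int_part a) in *.
  destruct (Rlt_dec (a - IZR f) c).
  - exists (IZR f + c). split. lra. apply dist_int_plus; lra.
  - destruct (Rlt_dec (1 - c) (a - IZR f)).
    + exists (IZR (f+1) + c). rewrite plus_IZR. split. lra.
      rewrite <- plus_IZR. apply dist_int_plus; lra.
    + exists a. split. lra. apply dist_ge_iff. intros k.
      destruct (Z_le_gt_dec k f) as [Hk|Hk].
      * apply IZR_le in Hk. rewrite Rabs_right by lra. lra.
      * assert (H: IZR (f+1) <= IZR k) by (apply IZR_le; lia). rewrite plus_IZR in H.
        rewrite Rabs_left1 by lra. lra.
Qed.

Lemma Rmin_ge_iff p q c: Rmin p q >= c <-> p >= c /\ q >= c.
Proof. unfold Rmin; destruct (Rle_dec p q); split; [intros; split|intros [? ?]|intros; split|intros [? ?]]; lra. Qed.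

Lemma fold_ge t rest a c:
  fold_left (fun m w => Rmin m (dist_int (t * INR w))) rest a >= c <->
  a >= c /\ forall w, In w rest -> dist_int (t * INR w) >= c.
Proof.
  revert a. induction rest as [|x rest IH]; intros a; simpl.
  - split; [intros; split; [lra| intros w []] | intros [? ?]; lra].
  - rewrite IH. rewrite Rmin_ge_iff. split.
    + intros [[Ha Hx] Hr]. split; auto. intros w [<-|Hw]; auto.
    + intros [Ha Hr]. split; auto.
Qed.

Lemma fold_le t rest a:
  fold_left (fun m w => Rmin m (dist_int (t * INR w))) rest a <= a.
Proof.
  revert a. induction rest as [|x rest IH]; intros a; simpl. lra.
  eapply Rle_trans. apply IH. apply Rmin_l.
Qed.

Lemma min_dist_ge t vs c: vs <> nil ->
  (min_dist t vs >= c <-> forall w, In w vs -> dist_int (t * INR w) >= c).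
Proof.
  intros Hne. destruct vs as [|v0 rest]; [congruence|]. unfold min_dist.
  rewrite fold_ge. split.
  - intros [H0 Hr] w [<-|Hw]; auto.
  - intros H; split; auto. apply H; left; auto. intros; apply H; right; auto.
Qed.

Lemma min_dist_le_half t vs: vs <> nil -> min_dist t vs <= 1/2.
Proof.
  intros Hne. destruct vs as [|v0 rest]; [congruence|]. unfold min_dist.
  eapply Rle_trans. apply fold_le. apply dist_le_half.
Qed.

Lemma ML_spec vs: vs <> nil ->
  (forall t, min_dist t vs <= ML vs) /\
  (forall e, 0 < e -> exists t, min_dist t vs > ML vs - e).
Proof.
  intros Hne. unfold ML.
  set (E := fun y => exists t : R, y = min_dist t vs).
  destruct (Lub_Rbar_correct E) as [Hub Hlub].
  assert (HE: forall t, E (min_dist t vs)) by (intros t; exists t; reflexivity).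
  assert (Hb: is_ub_Rbar E (Finite (1/2))).
  { intros x [t ->]. simpl. apply min_dist_le_half; auto. }
  destruct (Lub_Rbar E) as [l| |] eqn:Heq.
  - simpl. split.
    + intros t. specialize (Hub _ (HE t)). simpl in Hub. exact Hub.
    + intros e He. destruct (Classical_Prop.classic (exists t, min_dist t vs > l - e)) as [H|H]; auto.
      exfalso. assert (Hu: is_ub_Rbar E (Finite (l - e))).
      { intros x [t ->]. simpl. destruct (Rle_dec (min_dist t vs) (l - e)); auto.
        exfalso; apply H; exists t; lra. }
      specialize (Hlub _ Hu). simpl in Hlub. lra.
  - specialize (Hlub _ Hb). simpl in Hlub. contradiction.
  - specialize (Hub _ (HE 0)). simpl in Hub. contradiction.
Qed.

Lemma min_dist_nonneg t vs: vs <> nil -> min_dist t vs >= 0.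
Proof. intros Hne. apply min_dist_ge; auto. intros; apply dist_nonneg. Qed.

Lemma div_ge a b c d : 0<b -> 0<d -> a*d >= c*b -> a/b >= c/d.
Proof.
  intros Hb Hd H. apply Rle_ge. apply (Rmult_le_reg_r (b*d)). nra.
  replace (a/b*(b*d)) with (a*d) by (field; lra).
  replace (c/d*(b*d)) with (c*b) by (field; lra). lra.
Qed.

Theorem lemma8p5 (n : nat) (Hn : (3 <= n)%nat)
  (Hind : forall ws : list nat, length ws = (n - 1)%nat ->
     (forall w, In w ws -> (0 < w)%nat) ->
     (exists s : nat, (1 <= s)%nat /\
        ML ws = INR s / (INR (n - 1) * INR s + 1))
     \/ ML ws >= 1 / INR (n - 1))
  (v : nat -> nat)
  (Hpos : forall i, (1 <= i <= n - 1)%nat -> (0 < v i)%nat)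
  (Hinc : forall i, (1 <= i < n - 1)%nat -> (v i < v (S i))%nat)
  (HL : ML (map v (seq 1 (n - 1))) > 1 / INR n)
  (vn : nat) (Hvn_pos : (0 < vn)%nat)
  (Hvn : ((2 * n - 1) * v (n - 1) <= vn)%nat) :
  ML (map v (seq 1 (n - 1)) ++ vn :: nil) >= 1 / INR n.
Proof.
  set (l := map v (seq 1 (n - 1))) in *.
  assert (Hlne : l <> nil).
  { unfold l. replace (n-1)%nat with (S (n-2)) by lia. simpl. discriminate. }
  assert (Hl'ne : l ++ vn :: nil <> nil) by (destruct l; discriminate).
  assert (Hmono : forall d i, (1 <= i)%nat -> (i + d = n - 1)%nat -> (v i <= v (n-1))%nat).
  { induction d; intros i Hi Hd.
    - replace i with (n-1)%nat by lia. lia.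
    - specialize (IHd (S i) ltac:(lia) ltac:(lia)). specialize (Hinc i ltac:(lia)). lia. }
  assert (Hmem : forall w, In w l -> (0 < w)%nat /\ (w <= v (n-1))%nat).
  { intros w Hw. unfold l in Hw. apply in_map_iff in Hw. destruct Hw as [i [<- Hi]].
    apply in_seq in Hi. split. apply Hpos; lia. apply (Hmono (n - 1 - i)%nat); lia. }
  assert (HN : 3 <= INR n) by (replace 3 with (INR 3) by (simpl; ring); apply le_INR; lia).
  set (N := INR n) in *.
  set (L := ML l) in *.
  assert (HL2 : L >= 2 / (2 * N - 1)).
  { assert (Hlen : length l = (n-1)%nat) by (unfold l; rewrite length_map, length_seq; auto).
    destruct (Hind l Hlen (fun w Hw => proj1 (Hmem w Hw))) as [[s [Hs HLs]] | H].
    1: rewrite minus_INR in HLs by lia; simpl INR in HLs; fold N L in HLs.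
    2: rewrite minus_INR in H by lia; simpl INR in H; fold N L in H.
    - destruct s as [|[|s']]; [lia| |].
      + simpl INR in HLs. rewrite HLs in HL. replace ((N-1)*1+1) with N in HL by ring. lra.
      + rewrite HLs. rewrite !S_INR. pose proof (pos_INR s'). apply div_ge; nra.
    - eapply Rge_trans. apply H. apply div_ge; lra. }
  destruct (ML_spec _ Hl'ne) as [HMub _].
  destruct (ML_spec _ Hlne) as [_ HMapp]. fold L in HMapp.
  set (M := ML (l ++ vn :: nil)) in *.
  assert (Hkey : forall d, 0 < d < 1/N -> M >= 1/N - d).
  { intros d Hd. set (c := 1/N - d).
    assert (Hc : 0 < c <= 1/2).
    { unfold c. split. lra. assert (1/N <= 1/3) by (apply Rle_ge in HN; apply Rmult_le_compat_l; [lra|apply Rinv_le_contravar; lra]). lra. }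
    destruct (HMapp d ltac:(lra)) as [t Ht].
    assert (Ht' : forall w, In w l -> dist_int (t * INR w) >= L - d).
    { apply (min_dist_ge t l (L - d) Hlne). lra. }
    set (V := INR (v (n-1)%nat)).
    assert (HV : 0 < V) by (apply lt_0_INR; apply Hpos; lia).
    set (W := INR vn).
    assert (HW : W >= (2*N-1) * V).
    { apply le_INR in Hvn. rewrite mult_INR, minus_INR, mult_INR in Hvn by lia.
      change (INR 2) with 2 in Hvn. change (INR 1) with 1 in Hvn. fold N V W in Hvn. lra. }
    assert (HWp : 0 < W) by nra.
    set (r := (L - 1/N)/V).
    assert (Hr : 0 < r) by (unfold r; apply Rdiv_lt_0_compat; lra).
    assert (HrV : r * V = L - 1/N) by (unfold r; field; lra).
    assert (HrW : r * W >= c).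
    { assert (r * W >= r * ((2*N-1)*V)) by (apply Rle_ge, Rmult_le_compat_l; lra).
      assert (HL3 : L * (2*N-1) >= 2).
      { apply Rle_ge. apply Rge_le in HL2. apply (Rmult_le_compat_r (2*N-1)) in HL2; [|lra].
        replace (2 / (2 * N - 1) * (2 * N - 1)) with 2 in HL2 by (field; lra). lra. }
      assert (HiN : N * (1/N) = 1) by (field; lra).
      unfold c. nra. }
    destruct (gap (t*W - r*W) c Hc) as [y [Hy Hyd]].
    set (t' := y / W).
    assert (Ht'W : t' * W = y) by (unfold t'; field; lra).
    set (u := t' - t).
    assert (Hu : u * W = y - t * W) by (unfold u; rewrite Rmult_minus_distr_r, Ht'W; ring).
    assert (Hu2 : -r <= u <= r) by (split; nra).
    assert (Hmin : min_dist t' (l ++ vn :: nil) >= c).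
    { apply min_dist_ge; auto. intros w Hw. apply in_app_or in Hw. destruct Hw as [Hw|[<-|[]]].
      - pose proof (dist_lip (t * INR w) (t' * INR w)).
        specialize (Ht' w Hw). destruct (Hmem w Hw) as [_ Hwle]. apply le_INR in Hwle. fold V in Hwle.
        pose proof (pos_INR w).
        replace (t * INR w - t' * INR w) with (- (u * INR w)) in H by (unfold u; ring).
        rewrite Rabs_Ropp, Rabs_mult, (Rabs_right (INR w)) in H by lra.
        assert (Rabs u * INR w <= r * V).
        { apply Rmult_le_compat; try lra. apply Rabs_pos. apply Rabs_le; lra. }
        unfold c. lra.
      - fold W. rewrite Ht'W. exact Hyd. }
    specialize (HMub t'). fold M in HMub. unfold c in *. lra. }
  destruct (Rge_dec M (1/N)) as [H|H]; auto.
  exfalso. pose proof (min_dist_nonneg 0 _ Hl'ne). pose proof (HMub 0). fold M in H1.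
  specialize (Hkey ((1/N - M)/2) ltac:(split; lra)). lra.
Qed.
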